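(* A frame $L$ is subfit if and only if the coframe $(\mathsf{Ex}(L),\sqsubseteq)$ of exact filters is a Boolean algebra.
   Context: A frame is a complete lattice $L$ with $(\bigvee A)\wedge b=\bigvee_{a\in A}(a\wedge b)$. $L$ is subfit if for all $a,b$: whenever ($\forall c$, $a\vee c=1\Rightarrow b\vee c=1$) then $a\le b$. A filter is a nonempty up-closed subset closed under finite meets. A meet $\bigwedge M$ is exact if $(\bigwedge M)\vee b=\bigwedge_{a\in M}(a\vee b)$ for all $b$; $\mathsf{Ex}(L)$ is the set of filters containing every exact meet of their subsets, ordered by reverse inclusion $F\sqsubseteq G$ iff $G\subseteq F$ (it is a coframe in which joins are intersections). *)

(* Defs.v *)
Record CompleteLattice := {
  carrier :> Type;
  le : carrier -> carrier -> Prop;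
  le_refl : forall a, le a a;
  le_trans : forall a b c, le a b -> le b c -> le a c;
  le_antisym : forall a b, le a b -> le b a -> a = b;
  sup : (carrier -> Prop) -> carrier;
  sup_ub : forall (A : carrier -> Prop) a, A a -> le a (sup A);
  sup_least : forall (A : carrier -> Prop) b,
      (forall a, A a -> le a b) -> le (sup A) b
}.

Arguments le {c} _ _ : rename.
Arguments sup {c} _ : rename.

Section Ops.
Variable L : CompleteLattice.

Definition inf (M : L -> Prop) : L := sup (fun x => forall a, M a -> le x a).
Definition top : L := sup (fun _ => True).
Definition join (a b : L) : L := sup (fun x => x = a \/ x = b).
Definition meet (a b : L) : L := inf (fun x => x = a \/ x = b).

Definition is_frame : Prop :=
  forall (A : L -> Prop) (b : L),
    meet (sup A) b = sup (fun x => exists a, A a /\ x = meet a b).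

Definition subfit : Prop :=
  forall a b : L,
    (forall c, join a c = top -> join b c = top) -> le a b.

Definition is_filter (F : L -> Prop) : Prop :=
  (exists a, F a) /\
  (forall a b, F a -> le a b -> F b) /\
  (forall a b, F a -> F b -> F (meet a b)).

Definition exact_meet (M : L -> Prop) : Prop :=
  forall b, join (inf M) b = inf (fun x => exists a, M a /\ x = join a b).

Definition exact_filter (F : L -> Prop) : Prop :=
  is_filter F /\
  forall M : L -> Prop, (forall a, M a -> F a) -> exact_meet M -> F (inf M).

Definition ex_le (F G : L -> Prop) : Prop := forall a, G a -> F a.

End Ops.

(** Everything is stated relationally via least upper / greatest lower
    bounds, so no equality on elements of X is needed. *)
Section Bool.
Variables (X : Type) (S : X -> Prop) (R : X -> X -> Prop).

Definition is_lub2 (a b j : X) : Prop :=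
  S j /\ R a j /\ R b j /\ (forall z, S z -> R a z -> R b z -> R j z).
Definition is_glb2 (a b m : X) : Prop :=
  S m /\ R m a /\ R m b /\ (forall z, S z -> R z a -> R z b -> R z m).

Definition is_boolean_algebra : Prop :=
  exists bot tp : X,
    S bot /\ S tp /\ (forall x, S x -> R bot x /\ R x tp) /\
    (forall a b, S a -> S b -> exists j, is_lub2 a b j) /\
    (forall a b, S a -> S b -> exists m, is_glb2 a b m) /\
    (forall a b c bc m ab ac r,
        S a -> S b -> S c ->
        is_lub2 b c bc -> is_glb2 a bc m ->
        is_glb2 a b ab -> is_glb2 a c ac -> is_lub2 ab ac r -> R m r) /\
    (forall a, S a -> exists b, S b /\ is_glb2 a b bot /\ is_lub2 a b tp).
End Bool.

(* Main.v *)
Require Import Defs.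

Local Arguments inf {L} _.
Local Arguments top {L}.
Local Arguments join {L} _ _.
Local Arguments meet {L} _ _.
Local Arguments exact_meet {L} _.
Local Arguments is_filter {L} _.
Local Arguments exact_filter {L} _.

Lemma lr {L : CompleteLattice} (a : L) : le a a. Proof. apply le_refl. Qed.
Lemma lt {L : CompleteLattice} (a b c : L) : le a b -> le b c -> le a c.
Proof. apply le_trans. Qed.
Lemma las {L : CompleteLattice} (a b : L) : le a b -> le b a -> a = b.
Proof. apply le_antisym. Qed.

Lemma inf_lb {L : CompleteLattice} (M : L -> Prop) a : M a -> le (inf M) a.
Proof. intros Ha. unfold inf. apply sup_least. intros x Hx. apply Hx, Ha. Qed.
Lemma inf_gl {L : CompleteLattice} (M : L -> Prop) x :
  (forall a, M a -> le x a) -> le x (inf M).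
Proof. intros H. unfold inf. apply sup_ub. exact H. Qed.
Lemma join_l {L : CompleteLattice} (a b : L) : le a (join a b).
Proof. apply sup_ub. left; reflexivity. Qed.
Lemma join_r {L : CompleteLattice} (a b : L) : le b (join a b).
Proof. apply sup_ub. right; reflexivity. Qed.
Lemma join_lub {L : CompleteLattice} (a b c : L) : le a c -> le b c -> le (join a b) c.
Proof. intros H1 H2. apply sup_least. intros x [-> | ->]; assumption. Qed.
Lemma meet_l {L : CompleteLattice} (a b : L) : le (meet a b) a.
Proof. apply inf_lb. left; reflexivity. Qed.
Lemma meet_r {L : CompleteLattice} (a b : L) : le (meet a b) b.
Proof. apply inf_lb. right; reflexivity. Qed.
Lemma meet_glb {L : CompleteLattice} (a b c : L) : le c a -> le c b -> le c (meet a b).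
Proof. intros; apply inf_gl. intros x [-> | ->]; assumption. Qed.
Lemma le_top {L : CompleteLattice} (x : L) : le x top.
Proof. apply sup_ub. exact I. Qed.
Lemma top_eq {L : CompleteLattice} (x : L) : le top x -> x = top.
Proof. intros; apply las; [apply le_top|assumption]. Qed.
Lemma join_mono {L : CompleteLattice} (a a' b b' : L) :
  le a a' -> le b b' -> le (join a b) (join a' b').
Proof. intros; apply join_lub; [apply (lt _ a'); [assumption|apply join_l]
  | apply (lt _ b'); [assumption|apply join_r]]. Qed.
Lemma meet_mono {L : CompleteLattice} (a a' b b' : L) :
  le a a' -> le b b' -> le (meet a b) (meet a' b').
Proof. intros; apply meet_glb; [apply (lt _ a); [apply meet_l|assumption]
  | apply (lt _ b); [apply meet_r|assumption]]. Qed.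
Lemma meet_comm {L : CompleteLattice} (a b : L) : le (meet a b) (meet b a).
Proof. apply meet_glb; [apply meet_r|apply meet_l]. Qed.
Lemma join_comm {L : CompleteLattice} (a b : L) : le (join a b) (join b a).
Proof. apply join_lub; [apply join_r|apply join_l]. Qed.
Lemma join_comm_eq {L : CompleteLattice} (a b : L) : join a b = join b a.
Proof. apply las; apply join_comm. Qed.
Lemma inf_mono {L : CompleteLattice} (A B : L -> Prop) :
  (forall b, B b -> exists a, A a /\ le a b) -> le (inf A) (inf B).
Proof. intros H. apply inf_gl. intros b Hb. destruct (H b Hb) as [a [Ha Hab]].
  apply (lt _ a); [apply inf_lb; exact Ha | exact Hab]. Qed.
Lemma join_le_l {L : CompleteLattice} (a b c : L) : le (join a b) c -> le a c.
Proof. intros; apply (lt _ (join a b)); [apply join_l|assumption]. Qed.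
Lemma join_le_r {L : CompleteLattice} (a b c : L) : le (join a b) c -> le b c.
Proof. intros; apply (lt _ (join a b)); [apply join_r|assumption]. Qed.

Lemma D1 {L : CompleteLattice} (HL : is_frame L) (p q r : L) :
  le (meet (join p q) r) (join (meet p r) (meet q r)).
Proof.
  assert (E : meet (join p q) r =
     sup (fun x => exists a, (a = p \/ a = q) /\ x = meet a r)) by exact (HL _ r).
  rewrite E. apply sup_least. intros x [a [[-> | ->] ->]]; [apply join_l|apply join_r].
Qed.
Lemma D1' {L : CompleteLattice} (HL : is_frame L) (p q r : L) :
  le (meet r (join p q)) (join (meet r p) (meet r q)).
Proof.
  apply (lt _ (meet (join p q) r)); [apply meet_comm|].
  apply (lt _ _ _ (D1 HL p q r)). apply join_mono; apply meet_comm.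
Qed.
Lemma D2 {L : CompleteLattice} (HL : is_frame L) (p q r : L) :
  le (meet (join p r) (join q r)) (join (meet p q) r).
Proof.
  apply (lt _ _ _ (D1 HL p r (join q r))). apply join_lub.
  - apply (lt _ _ _ (D1' HL q r p)). apply join_mono; [apply lr|apply meet_r].
  - apply (lt _ r); [apply meet_l|apply join_r].
Qed.

Lemma exact_of_le {L : CompleteLattice} (M : L -> Prop) :
  (forall d, le (inf (fun y => exists a, M a /\ y = join a d)) (join (inf M) d)) ->
  exact_meet M.
Proof.
  intros H d. apply las; [|apply H].
  apply inf_gl. intros y [a [Ha ->]]. apply join_mono; [apply inf_lb; exact Ha|apply lr].
Qed.
Lemma exact_le {L : CompleteLattice} (M : L -> Prop) d : exact_meet M ->
  le (inf (fun y => exists a, M a /\ y = join a d)) (join (inf M) d).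
Proof. intros H; rewrite (H d); apply lr. Qed.

Lemma filter_top {L : CompleteLattice} (F : L -> Prop) : is_filter F -> F top.
Proof. intros [[a Ha] [Hu _]]. apply (Hu a); [exact Ha|apply le_top]. Qed.

Lemma ef_top {L : CompleteLattice} (F : L -> Prop) : exact_filter F -> F top.
Proof. intros [H _]; apply filter_top; exact H. Qed.
Lemma ef_up {L : CompleteLattice} (F : L -> Prop) a b : exact_filter F -> F a -> le a b -> F b.
Proof. intros [[_ [H _]] _]; apply H. Qed.
Lemma ef_meet {L : CompleteLattice} (F : L -> Prop) a b : exact_filter F -> F a -> F b -> F (meet a b).
Proof. intros [[_ [_ H]] _]; apply H. Qed.
Lemma ef_ex {L : CompleteLattice} (F : L -> Prop) M : exact_filter F ->
  (forall a, M a -> F a) -> exact_meet M -> F (inf M).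
Proof. intros [_ H]; apply H. Qed.

Lemma ef_T1 {L : CompleteLattice} : exact_filter (fun w : L => w = top).
Proof.
  split; [split; [|split]|].
  - exists top; reflexivity.
  - intros a b -> H. apply top_eq; exact H.
  - intros a b -> ->. apply top_eq. apply meet_glb; apply lr.
  - intros M HM _. apply top_eq. apply inf_gl. intros a Ha. rewrite (HM a Ha); apply lr.
Qed.

Lemma ef_all {L : CompleteLattice} : exact_filter (fun _ : L => True).
Proof. split; [split; [exists top; exact I|split; intros; exact I]|intros; exact I]. Qed.

Lemma ef_int {L : CompleteLattice} (a b : L -> Prop) :
  exact_filter a -> exact_filter b -> exact_filter (fun w => a w /\ b w).
Proof.
  intros Ha Hb. split; [split; [|split]|].
  - exists top; split; apply ef_top; assumption.
  - intros x y [H1 H2] H. split; eapply ef_up; eauto.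
  - intros x y [H1 H2] [H3 H4]. split; apply ef_meet; auto.
  - intros M HM HE. split; apply ef_ex; try assumption; intros x Hx; destruct (HM x Hx); assumption.
Qed.

Lemma ef_gen {L : CompleteLattice} (a b : L -> Prop) :
  exact_filter (fun w => forall z, exact_filter z -> (forall x, a x -> z x) ->
     (forall x, b x -> z x) -> z w).
Proof.
  split; [split; [|split]|].
  - exists top; intros; apply ef_top; assumption.
  - intros x y H1 H2 z Hz H3 H4. exact (ef_up z x y Hz (H1 z Hz H3 H4) H2).
  - intros x y H1 H2 z Hz H3 H4. exact (ef_meet z x y Hz (H1 z Hz H3 H4) (H2 z Hz H3 H4)).
  - intros M HM HE z Hz H3 H4. apply (ef_ex z M Hz); [|exact HE]. intros x Hx; exact (HM x Hx z Hz H3 H4).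
Qed.

Lemma ef_pr {L : CompleteLattice} (u : L) : exact_filter (fun w => le u w).
Proof.
  split; [split; [|split]|].
  - exists u; apply lr.
  - intros x y H1 H2. apply (lt _ x); auto.
  - intros x y H1 H2. apply meet_glb; auto.
  - intros M HM _. apply inf_gl. exact HM.
Qed.

Definition cmp {L : CompleteLattice} (F : L -> Prop) : L -> Prop :=
  fun y => forall f, F f -> join y f = top.

Lemma ef_cmp {L : CompleteLattice} (HL : is_frame L) (F : L -> Prop) :
  exact_filter (cmp F).
Proof.
  unfold cmp. split; [split; [|split]|].
  - exists top. intros f _. apply top_eq, join_l.
  - intros x y H1 H2 f Hf. apply top_eq. rewrite <- (H1 f Hf). apply join_mono; auto using lr.
  - intros x y H1 H2 f Hf. apply top_eq.
    apply (lt _ (meet (join x f) (join y f))); [|apply D2; exact HL].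
    rewrite (H1 f Hf), (H2 f Hf). apply meet_glb; apply lr.
  - intros M HM HE f Hf. apply top_eq. rewrite (HE f).
    apply inf_gl. intros y [m [Hm ->]]. rewrite (HM m Hm f Hf). apply lr.
Qed.

Ltac jin := match goal with
  | |- le ?a ?a => apply lr
  | |- le ?a (join ?b ?c) => first [apply (lt _ b); [jin|apply join_l]
                                  | apply (lt _ c); [jin|apply join_r]]
  end.
Ltac jsolve := repeat apply join_lub; jin.

Definition J {L : CompleteLattice} (a b : L -> Prop) (w : L) : Prop :=
  exists p q, a p /\ b q /\ le (meet p q) w.
Definition Gen {L : CompleteLattice} (a b : L -> Prop) (x : L) : Prop :=
  exists M, exact_meet M /\ (forall w, M w -> J a b w) /\ inf M = x.

Lemma single {L : CompleteLattice} (p : L) :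
  inf (fun w => w = p) = p /\ exact_meet (fun w => w = p).
Proof.
  assert (E : inf (fun w => w = p) = p).
  { apply las; [apply inf_lb; reflexivity|apply inf_gl; intros a ->; apply lr]. }
  split; [exact E|]. apply exact_of_le. intros d. rewrite E.
  apply inf_lb. exists p; split; reflexivity.
Qed.

Lemma norm {L : CompleteLattice} (S : L -> Prop) (M : L -> Prop) y :
  (forall a b, S a -> le a b -> S b) ->
  exact_meet M -> (forall w, M w -> S w) -> le (inf M) y ->
  exists M', exact_meet M' /\ (forall w, M' w -> S w) /\ inf M' = y.
Proof.
  intros HSu HE HS Hle.
  assert (E : inf (fun w => exists m, M m /\ w = join m y) = y).
  { apply las.
    - rewrite <- (HE y). apply join_lub; [exact Hle|apply lr].
    - apply inf_gl. intros w [m [Hm ->]]. apply join_r. }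
  exists (fun w => exists m, M m /\ w = join m y). split; [|split].
  - apply exact_of_le. intros d. rewrite E.
    apply (lt _ (inf (fun z => exists m, M m /\ z = join m (join y d)))).
    + apply inf_mono. intros b [m [Hm ->]]. exists (join (join m y) d).
      split; [exists (join m y); split; [exists m; split; [exact Hm|reflexivity]|reflexivity]|].
      jsolve.
    + rewrite <- (HE (join y d)). apply join_lub; [apply (lt _ y); [exact Hle|apply join_l]|apply lr].
  - intros w [m [Hm ->]]. apply (HSu m); [apply HS; exact Hm|apply join_l].
  - exact E.
Qed.

Lemma J_up {L : CompleteLattice} (a b : L -> Prop) x y : J a b x -> le x y -> J a b y.
Proof. intros [p [q [Hp [Hq H]]]] Hxy. exists p, q. split; [exact Hp|split; [exact Hq|]].
  apply (lt _ x); assumption. Qed.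

Lemma Gen_l {L : CompleteLattice} (a b : L -> Prop) p : is_filter b -> a p -> Gen a b p.
Proof.
  intros Hb Hp. destruct (single p) as [E1 E2].
  exists (fun w => w = p). split; [exact E2|split; [|exact E1]].
  intros w ->. exists p, top. split; [exact Hp|split; [apply filter_top; exact Hb|apply meet_l]].
Qed.
Lemma Gen_r {L : CompleteLattice} (a b : L -> Prop) q : is_filter a -> b q -> Gen a b q.
Proof.
  intros Ha Hq. destruct (single q) as [E1 E2].
  exists (fun w => w = q). split; [exact E2|split; [|exact E1]].
  intros w ->. exists top, q. split; [apply filter_top; exact Ha|split; [exact Hq|apply meet_r]].
Qed.

Lemma ef_Gen {L : CompleteLattice} (HL : is_frame L) (a b : L -> Prop) :
  is_filter a -> is_filter b -> exact_filter (Gen a b).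
Proof.
  intros Ha Hb. split; [split; [|split]|].
  - exists top. apply Gen_l; [exact Hb|apply filter_top; exact Ha].
  - intros x y [M [HE [HS Hx]]] Hxy. subst x.
    apply (norm (J a b) M y); [intros; eapply J_up; eauto|exact HE|exact HS|exact Hxy].
  - intros x y [M [HEM [HSM Hx]]] [N [HEN [HSN Hy]]]. subst x y.
    assert (EU : inf (fun w => M w \/ N w) = meet (inf M) (inf N)).
    { apply las.
      - apply meet_glb; apply inf_mono; intros w Hw; exists w; split; auto using lr.
      - apply inf_gl. intros w [Hw|Hw].
        + apply (lt _ (inf M)); [apply meet_l|apply inf_lb; exact Hw].
        + apply (lt _ (inf N)); [apply meet_r|apply inf_lb; exact Hw]. }
    exists (fun w => M w \/ N w). split; [|split; [|exact EU]].
    + apply exact_of_le. intros d. rewrite EU.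
      apply (lt _ (meet (join (inf M) d) (join (inf N) d))); [|apply D2; exact HL].
      apply meet_glb; [rewrite (HEM d)|rewrite (HEN d)]; apply inf_mono;
        intros z [m [Hm ->]]; exists (join m d); (split; [|apply lr]);
        exists m; split; auto.
    + intros w [Hw|Hw]; auto.
  - intros N HN HEN.
    set (U := fun w => exists n M, N n /\ exact_meet M /\ (forall w, M w -> J a b w)
                /\ inf M = n /\ M w).
    assert (EU : inf U = inf N).
    { apply las.
      - apply inf_gl. intros n Hn. destruct (HN n Hn) as [M [HE [HS Hx]]].
        apply (lt _ (inf M)); [|rewrite Hx; apply lr].
        apply inf_mono. intros w Hw. exists w. split; [|apply lr].
        exists n, M. auto.
      - apply inf_gl. intros u [n [M [Hn [HE [HS [Hx Hu]]]]]].
        apply (lt _ n); [apply inf_lb; exact Hn|]. rewrite <- Hx. apply inf_lb; exact Hu. }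
    exists U. split; [|split; [|exact EU]].
    + apply exact_of_le. intros d. rewrite EU. rewrite (HEN d).
      apply inf_gl. intros z [n [Hn ->]]. destruct (HN n Hn) as [M [HE [HS Hx]]].
      apply (lt _ (inf (fun z => exists m, M m /\ z = join m d))).
      * apply inf_mono. intros z [m [Hm ->]]. exists (join m d). split; [|apply lr].
        exists m. split; [exists n, M; auto|reflexivity].
      * rewrite <- (HE d). rewrite Hx. apply lr.
    + intros w [n [M [Hn [HE [HS [Hx Hu]]]]]]. apply HS; exact Hu.
Qed.

Lemma distr {L : CompleteLattice} (HL : is_frame L) (a b c bc m ab ac r : L -> Prop) :
  exact_filter a -> exact_filter b -> exact_filter c ->
  is_lub2 (L -> Prop) exact_filter (ex_le L) b c bc ->
  is_glb2 (L -> Prop) exact_filter (ex_le L) a bc m ->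
  is_glb2 (L -> Prop) exact_filter (ex_le L) a b ab ->
  is_glb2 (L -> Prop) exact_filter (ex_le L) a c ac ->
  is_lub2 (L -> Prop) exact_filter (ex_le L) ab ac r -> ex_le L m r.
Proof.
  intros Sa Sb Sc [Sbc [Hbcb [Hbcc Hbcl]]] [Sm [Hma [Hmbc Hml]]]
    [Sab [Haba [Habb Habl]]] [Sac [Haca [Hacc Hacl]]] [Sr [Hrab [Hrac Hrl]]].
  unfold ex_le in *.
  intros x Hx.
  assert (Hg1 : Gen a b x).
  { apply (Habl (Gen a b)); [apply ef_Gen; [exact HL|apply Sa|apply Sb]| | |apply Hrab; exact Hx].
    - intros w Hw. apply Gen_l; [apply Sb|exact Hw].
    - intros w Hw. apply Gen_r; [apply Sa|exact Hw]. }
  assert (Hg2 : Gen a c x).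
  { apply (Hacl (Gen a c)); [apply ef_Gen; [exact HL|apply Sa|apply Sc]| | |apply Hrac; exact Hx].
    - intros w Hw. apply Gen_l; [apply Sc|exact Hw].
    - intros w Hw. apply Gen_r; [apply Sa|exact Hw]. }
  assert (Hbc : forall w, b w -> c w -> bc w).
  { intros w H1 H2. apply (Hbcl (fun w => b w /\ c w)); [apply ef_int; assumption| | |split; assumption].
    - intros y [Hy _]; exact Hy.
    - intros y [_ Hy]; exact Hy. }
  destruct Hg1 as [M [HEM [HSM HxM]]]. destruct Hg2 as [N [HEN [HSN HxN]]].
  set (P := fun w => exists p q, M p /\ N q /\ w = join p q).
  assert (EP : inf P = x).
  { apply las.
    - apply (lt _ (inf (fun z => exists p, M p /\ z = join p x))).
      + apply inf_gl. intros z [p [Hp ->]]. apply (lt _ (join x p)); [|apply join_comm].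
        rewrite <- HxN. rewrite (HEN p). apply inf_mono. intros z [q [Hq ->]].
        exists (join p q). split; [exists p, q; auto|apply join_comm].
      + rewrite <- (HEM x). rewrite HxM. apply join_lub; apply lr.
    - apply inf_gl. intros w [p [q [Hp [Hq ->]]]]. apply (lt _ p); [|apply join_l].
      rewrite <- HxM. apply inf_lb; exact Hp. }
  assert (HEP : exact_meet P).
  { apply exact_of_le. intros d. rewrite EP.
    apply (lt _ (inf (fun z => exists p, M p /\ z = join p (join x d)))).
    - apply inf_gl. intros z [p [Hp ->]]. apply (lt _ (join x (join p d))); [|jsolve].
      rewrite <- HxN. rewrite (HEN (join p d)). apply inf_mono. intros z [q [Hq ->]].
      exists (join (join p q) d). split; [|jsolve].
      exists (join p q). split; [exists p, q; auto|reflexivity].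
    - rewrite <- (HEM (join x d)). rewrite HxM. jsolve. }
  rewrite <- EP. apply (ef_ex m P Sm); [|exact HEP].
  intros w [p [q [Hp [Hq ->]]]].
  destruct (HSM p Hp) as [a1 [b1 [Ha1 [Hb1 Hle1]]]].
  destruct (HSN q Hq) as [a2 [c2 [Ha2 [Hc2 Hle2]]]].
  apply (ef_up m (meet (meet a1 a2) (join b1 c2))); [exact Sm| |].
  - apply ef_meet; [exact Sm| |].
    + apply Hma. apply ef_meet; assumption.
    + apply Hmbc. apply Hbc.
      * apply (ef_up b b1); [exact Sb|exact Hb1|apply join_l].
      * apply (ef_up c c2); [exact Sc|exact Hc2|apply join_r].
  - apply (lt _ _ _ (D1' HL b1 c2 (meet a1 a2))). apply join_mono.
    + apply (lt _ (meet a1 b1)); [apply meet_mono; [apply meet_l|apply lr]|exact Hle1].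
    + apply (lt _ (meet a2 c2)); [apply meet_mono; [apply meet_r|apply lr]|exact Hle2].
Qed.

Lemma fwd (L : CompleteLattice) (HL : is_frame L) :
  subfit L -> is_boolean_algebra (L -> Prop) exact_filter (ex_le L).
Proof.
  intros Hsub.
  exists (fun _ => True), (fun w => w = top).
  split; [apply ef_all|]. split; [apply ef_T1|].
  split; [intros x Sx; split; [intros w _; exact I|intros w ->; apply ef_top; exact Sx]|].
  split.
  { intros a b Sa Sb. exists (fun w => a w /\ b w).
    split; [apply ef_int; assumption|]. split; [intros w [H _]; exact H|].
    split; [intros w [_ H]; exact H|]. intros z Sz Ha Hb w Hw. split; [apply Ha|apply Hb]; exact Hw. }
  split.
  { intros a b Sa Sb.
    exists (fun w => forall z, exact_filter z -> (forall x, a x -> z x) ->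
     (forall x, b x -> z x) -> z w).
    split; [apply ef_gen|]. split; [intros w Hw z Hz H3 H4; apply H3; exact Hw|].
    split; [intros w Hw z Hz H3 H4; apply H4; exact Hw|].
    intros z Sz Ha Hb w Hw. apply Hw; [exact Sz|exact Ha|exact Hb]. }
  split.
  { intros a b c bc m ab ac r Sa Sb Sc. apply distr; assumption. }
  intros a Sa. exists (cmp a). split; [apply ef_cmp; exact HL|].
  assert (Ctop : cmp a top) by (intros f _; apply top_eq, join_l).
  split.
  - split; [apply ef_all|]. split; [intros w _; exact I|]. split; [intros w _; exact I|].
    intros z Sz Hza Hzb w _.
    set (M0 := fun w => exists f y, a f /\ cmp a y /\ w = meet f y).
    assert (HEM0 : exact_meet M0).
    { apply exact_of_le. intros d. apply Hsub. intros c Hc.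
      assert (He : cmp a (join d c)).
      { intros f Hf. apply top_eq. rewrite <- Hc.
        apply (lt _ (join (join (meet f top) d) c)).
        - apply join_mono; [|apply lr]. apply inf_lb. exists (meet f top). split; [|reflexivity].
          exists f, top. auto.
        - apply (lt _ (join (join f d) c)); [apply join_mono; [apply join_mono; [apply meet_l|apply lr]|apply lr]|].
          jsolve. }
      assert (Het : join d c = top).
      { apply top_eq. rewrite <- Hc.
        apply (lt _ (join (join (meet top (join d c)) d) c)).
        - apply join_mono; [|apply lr]. apply inf_lb. exists (meet top (join d c)). split; [|reflexivity].
          exists top, (join d c). split; [apply ef_top; exact Sa|auto].
        - apply (lt _ (join (join (join d c) d) c)); [apply join_mono; [apply join_mono; [apply meet_r|apply lr]|apply lr]|].
          jsolve. }
      apply top_eq. rewrite <- Het. jsolve. }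
    assert (Hz0 : z (inf M0)).
    { apply (ef_ex z M0 Sz); [|exact HEM0]. intros v [f [y [Hf [Hy ->]]]].
      apply ef_meet; [exact Sz|apply Hza; exact Hf|apply Hzb; exact Hy]. }
    apply (ef_up z (inf M0)); [exact Sz|exact Hz0|].
    apply Hsub. intros c Hc.
    assert (Hcb : cmp a c).
    { intros f Hf. apply top_eq. rewrite <- Hc. apply join_lub; [|apply join_l].
      apply (lt _ f); [|apply join_r]. apply (lt _ (meet f top)); [|apply meet_l].
      apply inf_lb. exists f, top. auto. }
    assert (Ht : c = top).
    { apply top_eq. rewrite <- Hc. apply join_lub; [|apply lr].
      apply (lt _ (meet top c)); [|apply meet_r]. apply inf_lb. exists top, c.
      split; [apply ef_top; exact Sa|auto]. }
    rewrite Ht. apply top_eq, join_r.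
  - split; [apply ef_T1|]. split; [intros w ->; apply ef_top; exact Sa|].
    split; [intros w ->; apply ef_top; apply ef_cmp; exact HL|].
    intros z Sz Hza Hzb w Hw. apply top_eq. rewrite <- (Hzb w Hw w (Hza w Hw)).
    apply join_lub; apply lr.
Qed.

Lemma lemC {L : CompleteLattice} (bot tp : L -> Prop)
  (Hbd : forall x, exact_filter x -> ex_le L bot x /\ ex_le L x tp)
  (Hlub : forall a b, exact_filter a -> exact_filter b ->
      exists j, is_lub2 (L -> Prop) exact_filter (ex_le L) a b j)
  (Hglb : forall a b, exact_filter a -> exact_filter b ->
      exists j, is_glb2 (L -> Prop) exact_filter (ex_le L) a b j)
  (Hdist : forall a b c bc m ab ac r,
        exact_filter a -> exact_filter b -> exact_filter c ->
        is_lub2 (L -> Prop) exact_filter (ex_le L) b c bc ->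
        is_glb2 (L -> Prop) exact_filter (ex_le L) a bc m ->
        is_glb2 (L -> Prop) exact_filter (ex_le L) a b ab ->
        is_glb2 (L -> Prop) exact_filter (ex_le L) a c ac ->
        is_lub2 (L -> Prop) exact_filter (ex_le L) ab ac r -> ex_le L m r)
  (x c y : L -> Prop) :
  exact_filter x -> exact_filter c -> exact_filter y ->
  is_glb2 (L -> Prop) exact_filter (ex_le L) x c bot ->
  (forall z, exact_filter z -> (forall w, z w -> x w) -> (forall w, z w -> y w) ->
     forall w, z w -> tp w) ->
  forall w, y w -> c w.
Proof.
  intros Sx Sc Sy Hg Hcond.
  destruct (Hlub x y Sx Sy) as [bc Hbc]. pose proof Hbc as [Sbc [Hbcx [Hbcy Hbcl]]].
  assert (Hbct : forall w, bc w -> tp w) by (apply Hcond; assumption).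
  assert (Htc : forall w, tp w -> c w) by (apply (Hbd c Sc)).
  destruct (Hglb c bc Sc Sbc) as [m Hm]. pose proof Hm as [Sm [Hmc [Hmbc Hml]]].
  assert (Hmc' : forall w, m w -> c w).
  { apply (Hml c Sc); [intros w H; exact H|intros w H; apply Htc, Hbct, H]. }
  destruct (Hglb c x Sc Sx) as [ab Hab]. pose proof Hab as [Sab [Habc [Habx Habl]]].
  destruct (Hglb c y Sc Sy) as [ac Hac]. pose proof Hac as [Sac [Hacc [Hacy Hacl]]].
  destruct (Hlub ab ac Sab Sac) as [r Hr]. pose proof Hr as [Sr [Hrab [Hrac Hrl]]].
  pose proof (Hdist c x y bc m ab ac r Sc Sx Sy Hbc Hm Hab Hac Hr) as Hrm.
  assert (Hacb : forall w, ac w -> bot w) by (apply (Hbd ac Sac)).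
  destruct Hg as [Sbot [Hbx [Hbc' Hgl]]].
  assert (Hbab : forall w, bot w -> ab w) by (apply (Hgl ab Sab); assumption).
  assert (Hacr : forall w, ac w -> r w).
  { apply (Hrl ac Sac); [intros w H; apply Hbab, Hacb, H|intros w H; exact H]. }
  intros w Hw. apply Hmc', Hrm, Hacr, Hacy, Hw.
Qed.

Lemma bwd (L : CompleteLattice) (HL : is_frame L) :
  is_boolean_algebra (L -> Prop) exact_filter (ex_le L) -> subfit L.
Proof.
  intros [bot [tp [Sbot [Stp [Hbd [Hlub [Hglb [Hdist Hcomp]]]]]]]] a b Hsub.
  assert (Ttp : forall w, tp w -> w = top) by (apply (Hbd _ ef_T1)).
  assert (GS : forall u G, exact_filter G ->
     is_lub2 (L -> Prop) exact_filter (ex_le L) (fun w => le u w) G tp ->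
     forall g, G g -> cmp (fun w => le u w) g).
  { intros u G SG [_ [_ [_ Hl4]]] g Hg f Hf. apply Ttp.
    apply (Hl4 (fun w => le (join g f) w)); [apply ef_pr| | |apply lr].
    - intros w Hw. apply (lt _ f); [exact Hf|]. apply (lt _ (join g f)); [apply join_r|exact Hw].
    - intros w Hw. apply (ef_up G g); [exact SG|exact Hg|]. apply (lt _ (join g f)); [apply join_l|exact Hw]. }
  destruct (Hcomp _ (ef_pr a)) as [Ga [SGa [HgA HlA]]].
  destruct (Hcomp _ (ef_pr b)) as [Gb [SGb [HgB HlB]]].
  assert (H1 : forall w, Ga w -> cmp (fun w => le a w) w) by (apply GS; assumption).
  assert (H2 : forall w, cmp (fun w => le a w) w -> cmp (fun w => le b w) w).
  { intros y Hy f Hf. apply top_eq.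
    assert (E : join b y = top).
    { apply Hsub. rewrite join_comm_eq. apply Hy, lr. }
    rewrite <- E. apply join_lub; [apply (lt _ f); [exact Hf|apply join_r]|apply join_l]. }
  assert (H3 : forall w, cmp (fun w => le b w) w -> Gb w).
  { apply (lemC bot tp Hbd Hlub Hglb Hdist (fun w => le b w) Gb); [apply ef_pr|exact SGb|apply ef_cmp; exact HL|exact HgB|].
    intros z Sz Hzx Hzy w Hw.
    assert (E : w = top).
    { apply top_eq. rewrite <- (Hzy w Hw b (lr b)). apply join_lub; [apply lr|apply Hzx, Hw]. }
    rewrite E. apply ef_top; exact Stp. }
  destruct HgA as [S1 [K1 [K2 K3]]].
  assert (Hfin : forall w, le b w -> le a w).
  { apply (lemC bot tp Hbd Hlub Hglb Hdist Ga (fun w => le a w)); [exact SGa|apply ef_pr|apply ef_pr| |].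
    - split; [exact S1|split; [exact K2|split; [exact K1|]]].
      intros z Sz Hz1 Hz2. apply K3; assumption.
    - intros z Sz Hzx Hzy. destruct HlB as [_ [_ [_ Hl4]]]. apply Hl4; [exact Sz|exact Hzy|].
      intros w Hw. apply H3, H2, H1, Hzx, Hw. }
  apply Hfin, lr.
Qed.

Local Arguments inf L _ : clear implicits.
Local Arguments top L : clear implicits.
Local Arguments join L _ _ : clear implicits.
Local Arguments meet L _ _ : clear implicits.
Local Arguments exact_meet L _ : clear implicits.
Local Arguments is_filter L _ : clear implicits.
Local Arguments exact_filter L _ : clear implicits.

Theorem mainTheorem11 (L : CompleteLattice) (HL : is_frame L) :
  subfit L <-> is_boolean_algebra (L -> Prop) (exact_filter L) (ex_le L).
Proof.
  split; [apply fwd; exact HL|apply bwd; exact HL].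
Qed.
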